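(* Let $d>k>1$. For any ground-truth heads $\mathbf{w}_{\ast,1},\dots,\mathbf{w}_{\ast,M}\in\mathbb{R}^k$, any full-rank $\mathbf{B}_0\in\mathbb{R}^{d\times k}$, any initial head $\mathbf{w}_0\in\mathbb{R}^k$, any $\delta_0\in(0,1/2]$, any step size $\alpha>0$ and any number of rounds $T$, there exists $\mathbf{B}_\ast\in\mathbb{R}^{d\times k}$ with orthonormal columns such that $\operatorname{dist}(\mathbf{B}_0,\mathbf{B}_\ast)=\delta_0$, $\mathbf{B}_\ast\bar{\mathbf{w}}_\ast\in\operatorname{col}(\mathbf{B}_0)$, and $\operatorname{dist}(\mathbf{B}_T^{\mathrm{D\text{-}GD}},\mathbf{B}_\ast)\ge 0.7\,\delta_0$, where $\mathbf{B}_T^{\mathrm{D\text{-}GD}}$ is the representation produced after $T$ rounds of D-GD with step size $\alpha$ from $(\mathbf{B}_0,\mathbf{w}_0)$ in the system with ground-truth representation $\mathbf{B}_\ast$ and heads $\{\mathbf{w}_{\ast,i}\}$.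
   Context: Client $i$'s population loss is $f_i(\mathbf{B},\mathbf{w})=\tfrac12\|\mathbf{B}\mathbf{w}-\mathbf{B}_\ast\mathbf{w}_{\ast,i}\|_2^2$; $\bar{\mathbf{w}}_\ast=\frac1M\sum_i\mathbf{w}_{\ast,i}$. D-GD (distributed gradient descent, i.e. FedAvg with one local step and all clients participating) on $\frac1M\sum_i f_i$: $\mathbf{B}_{t+1}=\mathbf{B}_t-\alpha(\mathbf{B}_t\mathbf{w}_t-\mathbf{B}_\ast\bar{\mathbf{w}}_\ast)\mathbf{w}_t^\top$, $\mathbf{w}_{t+1}=\mathbf{w}_t-\alpha\mathbf{B}_t^\top(\mathbf{B}_t\mathbf{w}_t-\mathbf{B}_\ast\bar{\mathbf{w}}_\ast)$. Principal angle distance: for full-rank $\mathbf{B}_1,\mathbf{B}_2\in\mathbb{R}^{d\times k}$, $\operatorname{dist}(\mathbf{B}_1,\mathbf{B}_2)=\|\bar{\mathbf{B}}_{1,\perp}^\top\bar{\mathbf{B}}_2\|_2$, where the columns of $\bar{\mathbf{B}}_{1,\perp}$ and $\bar{\mathbf{B}}_2$ are orthonormal bases of $\operatorname{col}(\mathbf{B}_1)^\perp$ and $\operatorname{col}(\mathbf{B}_2)$. *)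

(* Defs.v *)
From mathcomp Require Import all_boot all_order all_algebra.
From mathcomp Require Import boolp classical_sets reals.
Set Implicit Arguments. Unset Strict Implicit. Unset Printing Implicit Defensive.
Import Order.TTheory GRing.Theory Num.Theory.
Local Open Scope ring_scope.
Local Open Scope classical_set_scope.

Section Defs.
Variable R : realType.

Definition vnorm n (x : 'cV[R]_n) : R := Num.sqrt (\sum_i (x i ord0) ^+ 2).

Definition specnorm m n (A : 'M[R]_(m, n)) : R :=
  sup [set y | exists x : 'cV[R]_n, vnorm x = 1 /\ y = vnorm (A *m x)].

Definition orthonormal_cols d n (U : 'M[R]_(d, n)) : Prop := U^T *m U = 1%:M.

(* Column spaces are represented in mxalgebra as row spaces of transposes;
   col(B1)^perp = { u | u^T B1 = 0 } is the row space of kermx B1. *)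
Definition pa_dist_val d k (B1 B2 : 'M[R]_(d, k)) (r : R) : Prop :=
  exists (n m : nat) (U : 'M[R]_(d, n)) (V : 'M[R]_(d, m)),
    [/\ orthonormal_cols U, (U^T :=: kermx B1)%MS,
        orthonormal_cols V, (V^T :=: B2^T)%MS
      & r = specnorm (U^T *m V)].

(* Principal angle distance (independent of the chosen bases). *)
Definition pa_dist d k (B1 B2 : 'M[R]_(d, k)) : R :=
  xget 0 [set r | pa_dist_val B1 B2 r].

(* One D-GD step on (1/M) sum_i f_i; target = B_* wbar_*. *)
Definition dgd_step d k (alpha : R) (target : 'cV[R]_d)
    (p : 'M[R]_(d, k) * 'cV[R]_k) : 'M[R]_(d, k) * 'cV[R]_k :=
  let: (B, w) := p in
  let res := B *m w - target in
  (B - alpha *: (res *m w^T), w - alpha *: (B^T *m res)).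

Definition dgd_B d k (alpha : R) (Bstar : 'M[R]_(d, k)) (wbar : 'cV[R]_k)
    (B0 : 'M[R]_(d, k)) (w0 : 'cV[R]_k) (T : nat) : 'M[R]_(d, k) :=
  (iter T (dgd_step alpha (Bstar *m wbar)) (B0, w0)).1.

Definition avg_head k M (ws : 'I_M -> 'cV[R]_k) : 'cV[R]_k :=
  (M%:R)^-1 *: \sum_(i < M) ws i.

End Defs.

(* Main.v *)
Require Import Defs.
From mathcomp Require Import all_boot all_order all_algebra.
From mathcomp Require Import boolp classical_sets reals.
From mathcomp Require Import lra ring.
Import Order.TTheory GRing.Theory Num.Theory.
Local Open Scope ring_scope.
Set Implicit Arguments. Unset Strict Implicit. Unset Printing Implicit Defensive.


Definition dot {R : realType} n (x y : 'cV[R]_n) : R := (x^T *m y) 0 0.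

Lemma dotE {R : realType} n (x y : 'cV[R]_n) : dot x y = \sum_i x i 0 * y i 0.
Proof. by rewrite /dot !mxE; apply: eq_bigr => i _; rewrite mxE. Qed.

Lemma dotC {R : realType} n (x y : 'cV[R]_n) : dot x y = dot y x.
Proof. by rewrite !dotE; apply: eq_bigr => i _; rewrite mulrC. Qed.

Lemma dotDl {R : realType} n (x y z : 'cV[R]_n) : dot (x + y) z = dot x z + dot y z.
Proof. by rewrite !dotE -big_split; apply: eq_bigr => i _; rewrite mxE mulrDl. Qed.

Lemma dotDr {R : realType} n (x y z : 'cV[R]_n) : dot z (x + y) = dot z x + dot z y.
Proof. by rewrite dotC dotDl !(dotC z). Qed.

Lemma dotZl {R : realType} n a (x y : 'cV[R]_n) : dot (a *: x) y = a * dot x y.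
Proof. by rewrite !dotE mulr_sumr; apply: eq_bigr => i _; rewrite mxE mulrA. Qed.

Lemma dotZr {R : realType} n a (x y : 'cV[R]_n) : dot x (a *: y) = a * dot x y.
Proof. by rewrite dotC dotZl dotC. Qed.

Lemma dotNl {R : realType} n (x y : 'cV[R]_n) : dot (- x) y = - dot x y.
Proof. by rewrite -scaleN1r dotZl mulN1r. Qed.

Lemma dotNr {R : realType} n (x y : 'cV[R]_n) : dot x (- y) = - dot x y.
Proof. by rewrite -scaleN1r dotZr mulN1r. Qed.

Lemma dotMl {R : realType} m n (A : 'M[R]_(m, n)) x y : dot (A *m x) y = dot x (A^T *m y).
Proof. by rewrite /dot trmx_mul mulmxA. Qed.

Lemma dotMr {R : realType} m n (A : 'M[R]_(m, n)) x y : dot x (A *m y) = dot (A^T *m x) y.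
Proof. by rewrite dotMl trmxK. Qed.

Lemma dot_ge0 {R : realType} n (x : 'cV[R]_n) : 0 <= dot x x.
Proof. by rewrite dotE; apply: sumr_ge0 => i _; rewrite -expr2 sqr_ge0. Qed.

Lemma vnormE {R : realType} n (x : 'cV[R]_n) : vnorm x = Num.sqrt (dot x x).
Proof. by rewrite /vnorm dotE; congr Num.sqrt; apply: eq_bigr => i _; rewrite expr2. Qed.

Lemma vnorm_ge0 {R : realType} n (x : 'cV[R]_n) : 0 <= vnorm x.
Proof. by rewrite vnormE sqrtr_ge0. Qed.

Lemma vnorm_sq {R : realType} n (x : 'cV[R]_n) : vnorm x ^+ 2 = dot x x.
Proof. by rewrite vnormE sqr_sqrtr // dot_ge0. Qed.

Lemma vnorm_iso {R : realType} d m (V : 'M[R]_(d, m)) x : V^T *m V = 1%:M -> vnorm (V *m x) = vnorm x.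
Proof. by move=> hV; rewrite !vnormE dotMl mulmxA hV mul1mx. Qed.

Lemma vnormZ {R : realType} n a (x : 'cV[R]_n) : vnorm (a *: x) = `|a| * vnorm x.
Proof. by rewrite !vnormE dotZl dotZr mulrA -expr2 sqrtrM ?sqr_ge0 // sqrtr_sqr. Qed.

Lemma le_dot_vnorm {R : realType} n (a b : 'cV[R]_n) : vnorm b = 1 -> `|dot a b| <= vnorm a.
Proof.
move=> hb; have hbb : dot b b = 1 by rewrite -vnorm_sq hb expr1n.
set t := dot a b.
have h := dot_ge0 (a - t *: b).
rewrite dotDl !dotDr !dotNl !dotNr !dotZl !dotZr hbb (dotC b a) -/t in h.
have ht : t ^+ 2 <= vnorm a ^+ 2 by rewrite vnorm_sq; lra.
by rewrite -(ler_pXn2r (n:=2)) ?nnegrE ?normr_ge0 ?vnorm_ge0 // real_normK // num_real.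
Qed.

Lemma vnorm_proj_le {R : realType} d n (U : 'M[R]_(d, n)) z : U^T *m U = 1%:M -> vnorm (U^T *m z) <= vnorm z.
Proof.
move=> hU; rewrite !vnormE ler_sqrt ?dot_ge0 //.
set p := U *m (U^T *m z).
have h1 : dot p z = dot (U^T *m z) (U^T *m z) by rewrite /p dotMl.
have h2 : dot p p = dot (U^T *m z) (U^T *m z) by rewrite {1}/p dotMl /p mulmxA hU mul1mx.
have h := dot_ge0 (z - p).
rewrite dotDl !dotDr !dotNl !dotNr (dotC z p) h1 h2 in h.
lra.
Qed.




Lemma dot_eq0 {R : realType} n (x : 'cV[R]_n) : dot x x = 0 -> x = 0.
Proof.
rewrite dotE => /eqP; rewrite psumr_eq0 => [/allP h|i _]; last by rewrite -expr2 sqr_ge0.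
apply/matrixP => i j; rewrite ord1 mxE.
have := h i (mem_index_enum i); rewrite /= -expr2 sqrf_eq0 => /eqP //.
Qed.

Lemma subB_sub {R : realType} m1 m2 n (A B : 'M[R]_(m1, n)) (C : 'M[R]_(m2, n)) :
  (A <= C)%MS -> (B <= C)%MS -> (A - B <= C)%MS.
Proof. by move=> hA hB; apply: addmx_sub => //; rewrite -scaleN1r scalemx_sub. Qed.

Lemma gs_step {R : realType} p d (a : 'rV[R]_d) (A1 : 'M[R]_(p, d)) :
  (exists r (Q : 'M[R]_(r, d)), Q *m Q^T = 1%:M /\ (Q :=: A1)%MS) ->
  exists r (Q : 'M[R]_(r, d)), Q *m Q^T = 1%:M /\ (Q :=: col_mx a A1)%MS.
Proof.
move=> [r [Q [hQ eQ]]].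
set a' := a - a *m Q^T *m Q.
have ha'Q : a' *m Q^T = 0 by rewrite /a' mulmxBl -!mulmxA hQ mulmx1 subrr.
have A1c : (A1 <= col_mx a A1)%MS by rewrite -addsmxE addsmxSr.
have ac : (a <= col_mx a A1)%MS by rewrite -addsmxE addsmxSl.
have Qc : (Q <= col_mx a A1)%MS by rewrite eQ.
case: (eqVneq a' 0) => [a'0 | a'n0].
  exists r, Q; split=> //; apply/eqmxP; apply/andP; split=> //.
  rewrite col_mx_sub; apply/andP; split; last by rewrite eQ.
  have -> : a = a *m Q^T *m Q by apply/eqP; rewrite -subr_eq0 -/a' a'0.
  exact: submxMl.
set n2 := (a' *m a'^T) 0 0.
have hn2 : n2 = dot a'^T a'^T by rewrite /n2 /dot trmxK.
have n2pos : 0 < n2.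
  rewrite lt_def {2}hn2 dot_ge0 andbT; apply/eqP => h0.
  move: hn2; rewrite h0 => /esym /dot_eq0 /eqP; rewrite trmx_eq0.
  by rewrite (negPf a'n0).
set q := (Num.sqrt n2)^-1 *: a'.
exists (1 + r)%N, (col_mx q Q); split.
  rewrite tr_col_mx mul_col_row.
  have hqQ : q *m Q^T = 0 by rewrite /q -scalemxAl ha'Q scaler0.
  have hQq : Q *m q^T = 0 by rewrite -[Q]trmxK -trmx_mul hqQ trmx0.
  have hqq : q *m q^T = 1%:M.
    apply/matrixP => i j; rewrite !ord1 /q linearZ /= -scalemxAl -scalemxAr.
    rewrite [RHS]mxE eqxx [LHS]mxE [X in _ * X]mxE -/n2 mulrA -invfM -expr2 sqr_sqrtr ?ltW // mulVf ?gt_eqF //.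
  by rewrite hqQ hQq hqq (scalar_mx_block 1 r) hQ.
have QQ' : (Q <= col_mx q Q)%MS by rewrite -addsmxE addsmxSr.
have hA1Q : (A1 <= Q)%MS by rewrite eQ.
apply/eqmxP; apply/andP; split; rewrite col_mx_sub; apply/andP; split.
- by rewrite /q scalemx_sub // /a' subB_sub // (submx_trans (submxMl _ _) Qc).
- by [].
- have -> : a = (Num.sqrt n2) *: q + a *m Q^T *m Q.
    by rewrite /q scalerA divff ?scale1r ?subrK // gt_eqF // sqrtr_gt0.
  apply: addmx_sub; first by rewrite scalemx_sub // -addsmxE addsmxSl.
  exact: submx_trans (submxMl _ _) QQ'.
- exact: submx_trans hA1Q QQ'.
Qed.

Lemma gram_schmidt {R : realType} p d (A : 'M[R]_(p, d)) :
  exists r (Q : 'M[R]_(r, d)), Q *m Q^T = 1%:M /\ (Q :=: A)%MS.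
Proof.
elim: p A => [|p IH] A.
  exists 0%N, 0; split; first by rewrite [LHS]flatmx0 [RHS]flatmx0.
  by rewrite [A]flatmx0; apply: eqmx_refl.
have eA : A = col_mx (usubmx (A : 'M_(1 + p, d))) (dsubmx (A : 'M_(1 + p, d))).
  by rewrite vsubmxK.
have := gs_step (usubmx (A : 'M_(1 + p, d))) (IH (dsubmx (A : 'M_(1 + p, d)))).
by rewrite -eA.
Qed.




Lemma orth_basis_ker {R : realType} d k (B : 'M[R]_(d, k)) :
  exists n (U : 'M[R]_(d, n)), orthonormal_cols U /\ (U^T :=: kermx B)%MS.
Proof.
have [r [Q [hQ eQ]]] := gram_schmidt (kermx B).
by exists r, Q^T; rewrite /orthonormal_cols trmxK.
Qed.

Lemma rank_orth {R : realType} r d (Q : 'M[R]_(r, d)) : Q *m Q^T = 1%:M -> \rank Q = r.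
Proof.
move=> hQ; apply/eqP; rewrite eqn_leq rank_leq_row /=.
by rewrite -{1}(mxrank1 R r) -hQ mxrankM_maxl.
Qed.

Lemma unit_row {R : realType} r d (Q : 'M[R]_(r, d)) i : Q *m Q^T = 1%:M ->
  dot (row i Q)^T (row i Q)^T = 1.
Proof.
move=> hQ; rewrite /dot trmxK !rowE trmx_mul -mulmxA (mulmxA Q) hQ mul1mx.
by rewrite trmx_delta mul_delta_mx mxE !eqxx.
Qed.

Lemma vnorm1 {R : realType} n (x : 'cV[R]_n) : dot x x = 1 -> vnorm x = 1.
Proof. by move=> h; rewrite vnormE h sqrtr1. Qed.

Lemma trmul11 {R : realType} n (u z : 'cV[R]_n) : u^T *m z = (dot u z)%:M.
Proof. by apply/matrixP => i j; rewrite !ord1 [RHS]mxE eqxx mulr1n. Qed.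

Lemma pa_nonempty {R : realType} d k (B1 Bs : 'M[R]_(d, k)) : orthonormal_cols Bs ->
  exists r, pa_dist_val B1 Bs r.
Proof.
move=> hBs; have [n [U [hU eU]]] := orth_basis_ker B1.
by exists (specnorm (U^T *m Bs)), n, k, U, Bs; split => //; apply: eqmx_refl.
Qed.

Lemma spec_ub {R : realType} d n m (U : 'M[R]_(d, n)) (V : 'M[R]_(d, m)) :
  orthonormal_cols U -> orthonormal_cols V ->
  has_ubound [set y | exists x : 'cV[R]_m, vnorm x = 1 /\ y = vnorm ((U^T *m V) *m x)].
Proof.
move=> hU hV; exists 1 => y [x [hx ->]].
by rewrite -mulmxA (le_trans (vnorm_proj_le _ hU)) // vnorm_iso // hx.
Qed.

Lemma col_of {R : realType} d m k (V : 'M[R]_(d, m)) (Bs : 'M[R]_(d, k)) :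
  (Bs^T <= V^T)%MS -> exists D : 'M[R]_(m, k), V *m D = Bs.
Proof.
case/submxP => D hD; exists D^T.
by rewrite -[V *m _]trmxK trmx_mul !trmxK -hD trmxK.
Qed.

Lemma pa_lower {R : realType} d k (B1 Bs : 'M[R]_(d, k)) (f : 'cV[R]_d) (u : 'cV[R]_k) dl :
  f^T *m B1 = 0 -> dot f f = 1 -> dot u u = 1 -> Bs^T *m f = dl *: u ->
  orthonormal_cols Bs ->
  forall r, pa_dist_val B1 Bs r -> dl <= r.
Proof.
move=> hf hff huu hBf hBs r [n [m [U [V [hU eU hV eV ->]]]]].
have [D hD] : exists D : 'M[R]_(m, k), V *m D = Bs by apply: col_of; rewrite eV.
set x := D *m u.
have hVx : V *m x = Bs *m u by rewrite /x mulmxA hD.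
have hx : vnorm x = 1 by rewrite -(vnorm_iso _ hV) hVx vnorm_iso // vnorm1.
have hfU : (f^T <= U^T)%MS by rewrite eU sub_kermx hf.
have [D2 hD2] : exists D2 : 'M[R]_(n, 1), U *m D2 = f.
  exact: col_of hfU.
have hUf : U *m (U^T *m f) = f by rewrite -hD2 (mulmxA U^T) hU mul1mx.
have hUfn : vnorm (U^T *m f) = 1.
  by rewrite -(vnorm_iso _ hU) hUf vnorm1.
apply: (@le_trans _ _ (vnorm ((U^T *m V) *m x))); last first.
  by apply: ub_le_sup; [apply: spec_ub | exists x].
have := le_dot_vnorm (U^T *m (V *m x)) hUfn.
rewrite dotMl trmxK hUf hVx dotMl hBf dotZr huu mulr1.
by rewrite -mulmxA hVx; apply: le_trans; apply: ler_norm.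
Qed.

Lemma pa_upper {R : realType} d k (B1 Bs : 'M[R]_(d, k)) (f : 'cV[R]_d) (u : 'cV[R]_k)
  (G : 'M[R]_k) dl :
  0 <= dl -> dot f f = 1 -> dot u u = 1 -> orthonormal_cols Bs ->
  Bs = B1 *m G + dl *: (f *m u^T) ->
  forall r, pa_dist_val B1 Bs r -> r <= dl.
Proof.
move=> hdl hff huu hBs eBs r [n [m [U [V [hU eU hV eV ->]]]]].
have [D hD] : exists D : 'M[R]_(m, k), V *m D = Bs by apply: col_of; rewrite eV.
have [D3 hD3] : exists D3 : 'M[R]_(k, m), Bs *m D3 = V by apply: col_of; rewrite eV.
have hUB : U^T *m B1 = 0 by apply/eqP; rewrite -sub_kermx eU.
apply: ge_sup.
  exists (vnorm ((U^T *m V) *m (D *m u))), (D *m u); split => //.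
  by rewrite -(vnorm_iso _ hV) mulmxA hD vnorm_iso // vnorm1.
move=> y [x [hx ->]].
set z := D3 *m x.
have hVz : V *m x = Bs *m z by rewrite /z mulmxA hD3.
have hz : vnorm z = 1 by rewrite -(vnorm_iso _ hBs) -hVz vnorm_iso.
rewrite -mulmxA hVz eBs mulmxDl mulmxDr -!mulmxA (mulmxA U^T) hUB mul0mx add0r.
rewrite -scalemxAl -scalemxAr -mulmxA trmul11 mul_mx_scalar vnormZ -scalemxAr vnormZ.
have h1 : `|dot u z| <= 1 by rewrite -(vnorm1 huu); apply: le_dot_vnorm.
have h2 : vnorm (U^T *m f) <= 1 by rewrite -(vnorm1 hff) vnorm_proj_le.
rewrite ger0_norm //; rewrite -[X in _ <= X]mulr1 ler_wpM2l //.
by rewrite -[1]mulr1 ler_pM ?normr_ge0 ?vnorm_ge0.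
Qed.



Unset Implicit Arguments.

Theorem proposition1 (R : realType) (d k M : nat) (hkd : (1 < k < d)%N)
  (hM : (0 < M)%N) (ws : 'I_M -> 'cV[R]_k)
  (B0 : 'M[R]_(d, k)) (hB0 : \rank B0 = k) (w0 : 'cV[R]_k)
  (delta0 : R) (hdelta : 0 < delta0 <= 1 / 2)
  (alpha : R) (halpha : 0 < alpha) (T : nat) :
  exists Bstar : 'M[R]_(d, k),
    [/\ orthonormal_cols Bstar,
        pa_dist B0 Bstar = delta0,
        (exists v : 'cV[R]_k, Bstar *m avg_head ws = B0 *m v)
      & pa_dist (dgd_B alpha Bstar (avg_head ws) B0 w0 T) Bstar
          >= 7 / 10 * delta0].
Proof.
case/andP: hkd => hk1 hkd.
case/andP: hdelta => hd0 hd1.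
set wbar := avg_head ws.
have [n [U [hU eU]]] := orth_basis_ker B0.
have hn : (0 < n)%N.
  have := rank_orth (Q := U^T); rewrite trmxK => /(_ hU) <-.
  by rewrite eU mxrank_ker hB0 subn_gt0.
set f : 'cV[R]_d := (row (Ordinal hn) U^T)^T.
have hff : dot f f = 1 by apply: unit_row; rewrite trmxK.
have hUB : U^T *m B0 = 0 by apply/eqP; rewrite -sub_kermx eU.
have hfB0 : f^T *m B0 = 0 by rewrite trmxK -row_mul hUB row0.
have [n2 [U2 [hU2 eU2]]] := orth_basis_ker wbar.
have hn2 : (0 < n2)%N.
  have := rank_orth (Q := U2^T); rewrite trmxK => /(_ hU2) <-.
  rewrite eU2 mxrank_ker subn_gt0.
  exact: leq_ltn_trans (rank_leq_col wbar) hk1.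
set u : 'cV[R]_k := (row (Ordinal hn2) U2^T)^T.
have huu : dot u u = 1 by apply: unit_row; rewrite trmxK.
have hUw : U2^T *m wbar = 0 by apply/eqP; rewrite -sub_kermx eU2.
have huw : u^T *m wbar = 0 by rewrite trmxK -row_mul hUw row0.
have [r [Q [hQ eQ]]] := gram_schmidt B0^T.
have hr : r = k by rewrite -(rank_orth hQ) eQ mxrank_tr.
subst r.
have [G hG] : exists G : 'M[R]_(k, k), Q = G *m B0^T.
  by apply/submxP; rewrite eQ.
set E := Q^T.
have hEB : E = B0 *m G^T by rewrite /E hG trmx_mul trmxK.
have hEE : E^T *m E = 1%:M by rewrite /E trmxK.
have hfE : f^T *m E = 0 by rewrite hEB mulmxA hfB0 mul0mx.
have hEf : E^T *m f = 0 by rewrite -[f]trmxK -trmx_mul hfE trmx0.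
have hff1 : f^T *m f = 1%:M by rewrite trmul11 hff.
have huu1 : u^T *m u = 1%:M by rewrite trmul11 huu.
set s := Num.sqrt (1 - delta0 ^+ 2).
have hs : s ^+ 2 = 1 - delta0 ^+ 2 by rewrite sqr_sqrtr //; nra.
set P := u *m u^T.
have hPT : P^T = P by rewrite /P trmx_mul trmxK.
have hPP : P *m P = P by rewrite /P mulmxA -(mulmxA u) huu1 mulmx1.
set X : 'M[R]_k := 1%:M + (s - 1) *: P.
set Y : 'M[R]_(1, k) := delta0 *: u^T.
set Bs := E *m X + f *m Y.
have hXT : X^T = X by rewrite /X [(_ + _)^T]linearD /= tr_scalar_mx linearZ /= hPT.
have hBs : orthonormal_cols Bs.
  rewrite /orthonormal_cols /Bs [(_ + _)^T]linearD /= !trmx_mul mulmxDl [X^T *m E^T *m _]mulmxDr [Y^T *m f^T *m _]mulmxDr.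
  have -> : X^T *m E^T *m (E *m X) = X^T *m X by rewrite mulmxA -(mulmxA X^T) hEE mulmx1.
  have -> : X^T *m E^T *m (f *m Y) = 0 by rewrite mulmxA -(mulmxA X^T) hEf mulmx0 mul0mx.
  have -> : Y^T *m f^T *m (E *m X) = 0 by rewrite mulmxA -(mulmxA Y^T) hfE mulmx0 mul0mx.
  have -> : Y^T *m f^T *m (f *m Y) = Y^T *m Y by rewrite mulmxA -(mulmxA Y^T) hff1 mulmx1.
  rewrite addr0 add0r hXT /Y [(_ *: _)^T]linearZ /= trmxK -scalemxAl -scalemxAr scalerA -/P /X.
  rewrite mulmxDl !mulmxDr !mul1mx mulmx1 -scalemxAl -scalemxAr scalerA hPP.
  set c := s - 1.
  have hc : c + (c + c * c) + delta0 * delta0 = 0 by rewrite /c; nra.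
  clearbody P; apply/matrixP => i j; rewrite !mxE.
  set pij := P i j; set oij := (i == j)%:R.
  have -> : oij + c * pij + (c * pij + c * c * pij) + delta0 * delta0 * pij = oij + (c + (c + c * c) + delta0 * delta0) * pij by ring.
  by rewrite hc mul0r addr0.
have hXw : X *m wbar = wbar.
  by rewrite /X mulmxDl mul1mx -scalemxAl /P -mulmxA huw mulmx0 scaler0 addr0.
have hYw : Y *m wbar = 0 by rewrite /Y -scalemxAl huw scaler0.
have hBw : Bs *m wbar = B0 *m (G^T *m wbar).
  by rewrite /Bs mulmxDl -!mulmxA hXw hYw mulmx0 addr0 hEB mulmxA.
have hBsf : Bs^T *m f = delta0 *: u.
  rewrite /Bs [(_ + _)^T]linearD /= !trmx_mul mulmxDl -!mulmxA hEf hff1 mulmx0.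
  by rewrite mulmx1 add0r /Y [(_ *: _)^T]linearZ /= trmxK.
have hfBs : f^T *m Bs = delta0 *: u^T.
  by rewrite -[f^T *m Bs]trmxK trmx_mul trmxK hBsf [(_ *: _)^T]linearZ.
have eBs : Bs = B0 *m (G^T *m X) + delta0 *: (f *m u^T).
  by rewrite /Bs mulmxA -hEB /Y scalemxAr.
have hft : f^T *m (Bs *m wbar) = 0 by rewrite mulmxA hfBs -scalemxAl huw scaler0.
have hdgd : forall t, f^T *m (iter t (dgd_step alpha (Bs *m wbar)) (B0, w0)).1 = 0.
  elim=> [|t IH] //=.
  case: (iter t _ _) IH => B w /= IH.
  by rewrite mulmxBr -scalemxAr mulmxA mulmxBr mulmxA IH mul0mx hft subrr mul0mx scaler0 subrr.
have hd0' : 0 <= delta0 by apply: ltW.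
exists Bs; split => //.
- rewrite /pa_dist; have := xgetPex 0 (pa_nonempty B0 hBs).
  set r := xget _ _ => hr.
  apply/le_anti/andP; split.
    exact: (pa_upper hd0' hff huu hBs eBs hr).
  exact: (pa_lower hfB0 hff huu hBsf hBs hr).
- by exists (G^T *m wbar).
- rewrite /pa_dist; have := xgetPex 0 (pa_nonempty (dgd_B alpha Bs wbar B0 w0 T) hBs).
  set r := xget _ _ => hr.
  have := pa_lower (hdgd T) hff huu hBsf hBs hr.
  by apply: le_trans; lra.
Qed.
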